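(* Let $k\ge 2$ and $L\ge k$ be integers, and let $z$ be a (complex) fugacity. For a boundary tuple $S=(h_1,\dots,h_k)$ with each $h_i\in\{0,1,\dots,k-1\}$, let $Z_{L,k}(z,S)$ denote the partition function of $k$-mers on the width-$k$ strip with extended right boundary $S$, as defined in the context. Suppose at least one $h_i\neq 0$. Then for every permutation $\sigma$ of $\{1,\dots,k\}$, with $S'=(h_{\sigma(1)},\dots,h_{\sigma(k)})$, we have $$Z_{L,k}(z,S)=Z_{L,k}(z,S').$$
   Context: Consider the strip of lattice sites $(i,x)$ with rows $i\in\{1,\dots,k\}$ and columns $x\in\{1,2,\dots\}$. A $k$-mer is a set of $k$ consecutive sites in a straight line, either horizontal (same row $i$, columns $x,x+1,\dots,x+k-1$) or vertical (same column $x$, all rows $1,\dots,k$). A configuration is a set of $k$-mers no two of which share a site (sites may be left empty). Given $S=(h_1,\dots,h_k)$ with $h_i\in\{0,\dots,k-1\}$, the region is $R_S=\{(i,x): 1\le i\le k,\ 1\le x\le L+h_i\}$. Here $h_i$ is the number of sites to the right of the site $(i,L)$ in row $i$ that are occupied by the horizontal $k$-mer covering $(i,L)$: if $h_i=0$, the row $i$ contains no sites beyond column $L$; if $h_i\ge1$, the configuration is required to contain the horizontal $k$-mer in row $i$ occupying columns $L+h_i-k+1,\dots,L+h_i$ (which covers $(i,L)$). $Z_{L,k}(z,S)$ is the sum, over all configurations of $k$-mers contained in $R_S$ satisfying these requirements, of $z^{N}$, where $N$ is the number of $k$-mers in the configuration. *)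

(* Defs.v *)
From mathcomp Require Import all_boot all_order all_algebra all_fingroup all_field.
Set Implicit Arguments. Unset Strict Implicit. Unset Printing Implicit Defensive.
Import GRing.Theory Num.Theory.

(* Conventions (0-indexed): row i of the paper is i : 'I_k (paper row i+1),
   column x of the paper is the nat x-1.  The region R_S is
   { (i,x) : x < L + h i }.  Every k-mer contained in any R_S only uses
   columns < L + k - 1, so start columns range over 'I_(L+k). *)

(* A k-mer: horizontal in row r starting at column s (covering s..s+k-1),
   or vertical in column c (covering rows 0..k-1). *)
Definition kmer (k L : nat) : finType := (('I_k * 'I_(L + k)) + 'I_(L + k))%type.

Definition covers (k L : nat) (m : kmer k L) (i : 'I_k) (x : nat) : bool :=
  match m with
  | inl (r, s) => (i == r) && (s <= x < s + k)
  | inr c => x == c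
  end.

Definition contained (k L : nat) (h : 'I_k -> nat) (m : kmer k L) : bool :=
  match m with
  | inl (r, s) => s + k <= L + h r
  | inr c => [forall i : 'I_k, c < L + h i]
  end.

Definition overlap (k L : nat) (m1 m2 : kmer k L) : bool :=
  [exists i : 'I_k, exists x : 'I_(L + k + k), covers m1 i x && covers m2 i x].

(* the horizontal k-mer in row i occupying (paper) columns
   L+h_i-k+1 .. L+h_i, i.e. 0-indexed start column L + h_i - k *)
Definition required_in (k L : nat) (h : 'I_k -> nat) (C : {set kmer k L}) : bool :=
  [forall i : 'I_k, (0 < h i) ==>
     [exists s : 'I_(L + k), (val s == L + h i - k) && (inl (i, s) \in C)]].

Definition valid_config (k L : nat) (h : 'I_k -> nat) (C : {set kmer k L}) : bool :=
  [forall m in C, contained h m] &&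
  [forall m1 in C, forall m2 in C, (m1 != m2) ==> ~~ overlap m1 m2] &&
  required_in h C.

Definition Z (k L : nat) (z : algC) (h : 'I_k -> nat) : algC :=
  (\sum_(C : {set kmer k L} | valid_config h C) z ^+ #|C|)%R.

(* Main.v *)
Require Import Defs.
From mathcomp Require Import all_boot all_order all_algebra all_fingroup all_field.

Set Implicit Arguments.

Definition gk (k L : nat) (p : 'S_k) (m : kmer k L) : kmer k L :=
  match m with
  | inl (r, s) => inl (p r, s)
  | inr c => inr c
  end.


Lemma gk_inj k L (p : 'S_k) : injective (@gk k L p).
Proof.
move=> [[r1 s1]|c1] [[r2 s2]|c2] //=; first by case=> /perm_inj -> ->.
all: try by case=> ->.
Qed.

Lemma covers_gk k L (p : 'S_k) (m : kmer k L) i x :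
  covers (gk p m) (p i) x = covers m i x.
Proof. by case: m => [[r s]|c] //=; rewrite (inj_eq perm_inj). Qed.

Lemma overlap_gk k L (p : 'S_k) (m1 m2 : kmer k L) :
  overlap (gk p m1) (gk p m2) = overlap m1 m2.
Proof.
rewrite /overlap; apply/existsP/existsP => [[i /existsP [x H]]|[i /existsP [x H]]].
  exists (p^-1 i)%g; apply/existsP; exists x.
  by rewrite /= -(covers_gk p m1) -(covers_gk p m2) permKV.
exists (p i); apply/existsP; exists x.
by rewrite /= !covers_gk.
Qed.

Lemma contained_gk k L (h : 'I_k -> nat) (p : 'S_k) (m : kmer k L) :
  contained h (gk p m) = contained (fun i => h (p i)) m.
Proof.
case: m => [[r s]|c] //=.
apply/forallP/forallP => H i; first exact: H.
by rewrite -(permKV p i); exact: H.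
Qed.

Lemma valid_gk k L (h : 'I_k -> nat) (p : 'S_k) (C : {set kmer k L}) :
  valid_config h (gk p @: C) = valid_config (fun i => h (p i)) C.
Proof.
rewrite /valid_config; congr (_ && _ && _).
- apply/forallP/forallP => H m.
    apply/implyP => mC; move: (H (gk p m)).
    rewrite mem_imset; last exact: gk_inj.
    by rewrite mC /= contained_gk.
  apply/implyP => /imsetP [m' m'C ->].
  by rewrite contained_gk; exact: (implyP (H m') m'C).
- apply/forallP/forallP => H m1.
    apply/implyP => m1C; apply/forallP => m2; apply/implyP => m2C.
    move: (H (gk p m1)); rewrite mem_imset; last exact: gk_inj.
    rewrite m1C /= => /forallP /(_ (gk p m2)); rewrite mem_imset; last exact: gk_inj.
    rewrite m2C /=.
    by rewrite (inj_eq (@gk_inj k L p)) overlap_gk.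
  apply/implyP => /imsetP [m1' m1C ->]; apply/forallP => m2; apply/implyP => /imsetP [m2' m2C ->].
  rewrite (inj_eq (@gk_inj k L p)) overlap_gk.
  exact: (implyP (forallP (implyP (H m1') m1C) m2') m2C).
- rewrite /required_in; apply/forallP/forallP => H i; apply/implyP => hp.
    have /existsP [s /andP [e m]] := implyP (H (p i)) hp.
    apply/existsP; exists s; rewrite e /=; move: m.
    rewrite (_ : inl (p i, s) = gk p (inl (i, s))) // mem_imset //; exact: gk_inj.
  have hp' : 0 < h (p ((p^-1)%g i)) by rewrite permKV.
  have /existsP [s /andP [e m]] := implyP (H (p^-1 i)%g) hp'.
  apply/existsP; exists s; move: e; rewrite /= permKV => -> /=.
  rewrite (_ : inl (i, s) = gk p (inl ((p^-1 i)%g, s))); last by rewrite /= permKV.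
  rewrite mem_imset //; exact: gk_inj.
Qed.

Unset Implicit Arguments.

Theorem lemma1 (k L : nat) (z : algC) (h : 'I_k -> nat) (sigma : 'S_k) :
  2 <= k -> k <= L ->
  (forall i, h i < k) ->
  (exists i, h i != 0) ->
  Z L z h = Z L z (fun i => h (sigma i)).
Proof.
move=> _ _ _ _; rewrite /Z.
rewrite (reindex_inj (imset_inj (@gk_inj k L sigma))) /=.
apply: eq_big => C; first by rewrite valid_gk.
by rewrite card_imset //; exact: gk_inj.
Qed.
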